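(* Let $\mathcal{B}$ be a $\sigma$-algebra on a nonempty set $E$ and let $\nu,\tau$ be $\sigma$-maxitive measures on $\mathcal{B}$, with $\tau$ $\sigma$-principal. Then $\nu\ll\tau$ if and only if $\nu\lll\tau$. In this situation, the relative density of $\nu$ with respect to $\tau$ is unique $\tau$-almost everywhere.
   Context: A $\sigma$-maxitive measure on $\mathcal{B}$ is a map $\nu:\mathcal{B}\to[0,\infty]$ with $\nu(\emptyset)=0$, $\nu(B\cup B')=\max(\nu(B),\nu(B'))$, and $\nu(\bigcup_nB_n)=\lim_n\nu(B_n)$ for nondecreasing sequences in $\mathcal{B}$. A subset $N\subset E$ is $\tau$-negligible if $N\subset G$ for some $G\in\mathcal{B}$ with $\tau(G)=0$; a property holds $\tau$-almost everywhere if it holds outside a $\tau$-negligible set. A $\sigma$-ideal of $\mathcal{B}$ is a nonempty $\mathcal{I}\subset\mathcal{B}$ closed under countable unions and such that $B\subset I\in\mathcal{I}$, $B\in\mathcal{B}$ imply $B\in\mathcal{I}$. $\tau$ is $\sigma$-principal if for every $\sigma$-ideal $\mathcal{I}$ of $\mathcal{B}$ there is $L\in\mathcal{I}$ such that $S\setminus L$ is $\tau$-negligible for all $S\in\mathcal{I}$. A map $f:E\to[0,\infty]$ is $\mathcal{B}$-measurable if $\{f>t\}\in\mathcal{B}$ for all $t\geq0$; its $\tau$-essential supremum on $B$ is $\bigoplus^{\tau}_{x\in B}f(x)=\inf\{t>0:B\cap\{f>t\}\text{ is }\tau\text{-negligible}\}$. We write $\nu\ll\tau$ if $\tau(B)=0\Rightarrow\nu(B)=0$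 for all $B\in\mathcal{B}$, and $\nu\lll\tau$ if there is a $\mathcal{B}$-measurable $f$ (a relative density of $\nu$ w.r.t. $\tau$) with $\nu(B)=\bigoplus^{\tau}_{x\in B}f(x)$ for all $B\in\mathcal{B}$. *)

(* Defs.v *)
From HB Require Import structures.
From mathcomp Require Import all_boot all_order all_algebra.
From mathcomp Require Import all_classical all_reals ereal topology normedtype sequences measure.
Set Implicit Arguments. Unset Strict Implicit. Unset Printing Implicit Defensive.
Import Order.TTheory GRing.Theory Num.Theory.
Local Open Scope classical_set_scope.
Local Open Scope ring_scope.
Local Open Scope ereal_scope.

(* The sigma-algebra B on E is the sigma-algebra [measurable] of a
   measurableType T; maps on B are represented by maps on [set T] whose
   properties are only required on measurable sets. *)

Section Defs.
Context {d : measure_display} {T : measurableType d} {R : realType}.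

Definition sigma_maxitive (nu : set T -> \bar R) : Prop :=
  [/\ nu set0 = 0,
      (forall B, measurable B -> 0 <= nu B),
      (forall B B', measurable B -> measurable B' ->
          nu (B `|` B') = maxe (nu B) (nu B')) &
      (forall Bn : nat -> set T, (forall n, measurable (Bn n)) ->
          {homo Bn : n m / (n <= m)%N >-> n `<=` m} ->
          (nu \o Bn) @ \oo --> nu (\bigcup_n Bn n))].

Definition tau_negligible (tau : set T -> \bar R) (N : set T) : Prop :=
  exists G, [/\ measurable G, N `<=` G & tau G = 0].

Definition sigma_ideal (I : set (set T)) : Prop :=
  [/\ I !=set0,
      I `<=` measurable,
      (forall Bn : nat -> set T, (forall n, I (Bn n)) -> I (\bigcup_n Bn n)) &
      (forall B C, measurable B -> B `<=` C -> I C -> I B)].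

Definition sigma_principal (tau : set T -> \bar R) : Prop :=
  forall I, sigma_ideal I ->
    exists2 L, I L & forall S, I S -> tau_negligible tau (S `\` L).

Definition Bmeasurable (f : T -> \bar R) : Prop :=
  (forall x, 0 <= f x) /\
  (forall t : R, (0 <= t)%R -> measurable [set x | (t%:E < f x)]).

Definition ess_sup_on (tau : set T -> \bar R) (f : T -> \bar R) (B : set T)
    : \bar R :=
  ereal_inf [set t%:E | t in [set t : R |
     (0 < t)%R /\ tau_negligible tau (B `&` [set x | t%:E < f x])]].

Definition abs_cont (nu tau : set T -> \bar R) : Prop :=
  forall B, measurable B -> tau B = 0 -> nu B = 0.

Definition rel_density (nu tau : set T -> \bar R) (f : T -> \bar R) : Prop :=
  Bmeasurable f /\ forall B, measurable B -> nu B = ess_sup_on tau f B.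

Definition strong_abs_cont (nu tau : set T -> \bar R) : Prop :=
  exists f, rel_density nu tau f.

End Defs.

(* Main.v *)
Require Import Defs.
From HB Require Import structures.
From mathcomp Require Import all_boot all_order all_algebra.
From mathcomp Require Import all_classical all_reals ereal topology normedtype sequences measure.
From mathcomp Require Import lra.
Set Implicit Arguments. Unset Strict Implicit. Unset Printing Implicit Defensive.
Import Order.TTheory GRing.Theory Num.Theory.
Local Open Scope classical_set_scope.
Local Open Scope ring_scope.
Local Open Scope ereal_scope.

Section helpers.
Context {d : measure_display} {T : measurableType d} {R : realType}.
Implicit Types (nu tau : set T -> \bar R).

Lemma sm_mono nu : sigma_maxitive nu -> forall A B, measurable A -> measurable B ->
  A `<=` B -> nu A <= nu B.
Proof.
move=> [_ _ hmax _] A B mA mB AB.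
have -> : B = A `|` B by rewrite setUidr.
by rewrite hmax // le_max lexx.
Qed.

Lemma sm_bigcup nu (A : nat -> set T) (c : \bar R) : sigma_maxitive nu ->
  (forall n, measurable (A n)) -> (forall n, nu (A n) <= c) ->
  nu (\bigcup_n A n) <= c.
Proof.
move=> hnu mA hA.
have [_ _ hmax hcont] := hnu.
pose B := fun n => \big[setU/set0]_(i < n.+1) A i.
have mB n : measurable (B n) by apply: bigsetU_measurable => i _; exact: mA.
have hB : {homo B : n m / (n <= m)%N >-> n `<=` m}.
  move=> n m nm x; rewrite /B -!bigcup_mkord => -[i /= ilt Aix]; exists i => //=.
  exact: leq_trans ilt _.
have hBc n : nu (B n) <= c.
  elim: n => [|n ih]; rewrite /B big_ord_recr /=.
    by rewrite big_ord0 set0U; exact: hA.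
  rewrite hmax ?ge_max ?ih ?hA //.
  by apply: bigsetU_measurable => i _; exact: mA.
rewrite -bigcup_bigsetU_bigcup.
have h := hcont _ mB hB.
rewrite -(cvg_lim _ h) //.
apply: lime_le; first by apply/cvg_ex; eexists; exact: h.
by apply: nearW => n; exact: hBc.
Qed.

Lemma negl_mono tau (N N' : set T) : N `<=` N' -> tau_negligible tau N' ->
  tau_negligible tau N.
Proof. by move=> NN [G [mG sub tG]]; exists G; split => //; apply: subset_trans sub. Qed.

Lemma negl_bigcup tau (N : nat -> set T) : sigma_maxitive tau ->
  (forall n, tau_negligible tau (N n)) -> tau_negligible tau (\bigcup_n N n).
Proof.
move=> ht hN; have [G hG] := choice hN.
have mG : forall n, measurable (G n) by move=> n; case: (hG n).
exists (\bigcup_n G n); split.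
- exact: bigcupT_measurable.
- by move=> x [n _ Nx]; exists n => //; case: (hG n) => _ + _; apply.
- apply/eqP; rewrite eq_le; apply/andP; split.
    by apply: (sm_bigcup ht) => // n; case: (hG n) => // _ _ ->.
  by have [_ h0 _ _] := ht; apply: h0; exact: bigcupT_measurable.
Qed.

Lemma bigcup_rat (A : rat -> set T) :
  \bigcup_r A r = \bigcup_n (if unpickle n is Some r then A r else set0).
Proof.
apply/seteqP; split => x.
  move=> [r _ Arx]; exists (pickle r); first exact: I.
  by rewrite pickleK.
by move=> [n _]; case: (unpickle n) => // r Arx; exists r.
Qed.

Lemma negl_bigcup_rat tau (N : rat -> set T) : sigma_maxitive tau ->
  (forall r, tau_negligible tau (N r)) -> tau_negligible tau (\bigcup_r N r).
Proof.
move=> ht hN; rewrite bigcup_rat; apply: negl_bigcup => // n.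
case: (unpickle n) => [r|]; first exact: hN.
by exists set0; split => //; have [] := ht.
Qed.

Lemma sm_bigcup_rat nu (A : rat -> set T) (c : \bar R) : sigma_maxitive nu ->
  (forall n, measurable (A n)) -> (forall n, nu (A n) <= c) ->
  nu (\bigcup_n A n) <= c.
Proof.
move=> hnu mA hA; rewrite bigcup_rat; apply: sm_bigcup => // n.
  by case: (unpickle n) => [r|] //; exact: measurable0.
case: (unpickle n) => [r|]; first exact: hA.
have [-> h _ _] := hnu.
exact: le_trans (h _ (mA 0%Q)) (hA 0%Q).
Qed.

Lemma measurable_bigcap_rat (F : rat -> set T) :
  (forall i, measurable (F i)) -> measurable (\bigcap_i F i).
Proof.
move=> mF; rewrite -[X in measurable X]setCK setC_bigcap; apply: measurableC.
by apply: bigcupT_measurable_rat => i; exact: measurableC.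
Qed.

Lemma ess_le tau (f : T -> \bar R) B (c : R) : (0 <= c)%R ->
  (forall t : R, (c < t)%R -> tau_negligible tau (B `&` [set x | t%:E < f x])) ->
  ess_sup_on tau f B <= c%:E.
Proof.
move=> c0 h; apply/lee_addgt0Pr => e e0; rewrite -EFinD.
apply: ereal_inf_lbound; exists (c + e)%R => //; split; first lra.
apply: h; lra.
Qed.

Lemma ess_inv tau (f : T -> \bar R) B (c : R) : ess_sup_on tau f B <= c%:E ->
  forall t : R, (c < t)%R -> tau_negligible tau (B `&` [set x | t%:E < f x]).
Proof.
move=> hc t ct.
have : ess_sup_on tau f B < t%:E by apply: le_lt_trans hc _; rewrite lte_fin.
move/ereal_inf_lt => [_ [s [s0 hs]] <-]; rewrite lte_fin => st.
apply: negl_mono hs => x [Bx fx]; split => //.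
by apply: lt_trans fx; rewrite lte_fin.
Qed.

Lemma ess_ge0 tau (f : T -> \bar R) B : 0 <= ess_sup_on tau f B.
Proof.
by apply: le_ereal_inf_tmp => _ [s [s0 _] <-]; rewrite lee_fin ltW.
Qed.

Lemma lt_ex_n (c : R) (y : \bar R) : c%:E < y ->
  exists n : nat, (c + n.+1%:R^-1)%:E < y.
Proof.
case: y => [y||] //.
- by rewrite lte_fin => /ltr_add_invr [k hk]; exists k; rewrite lte_fin.
- by move=> _; exists 0%N; exact: ltry.
Qed.

Lemma rat_between (a b : \bar R) : 0 <= a -> a < b ->
  exists q : rat, a <= `|ratr q|%:E /\ `|ratr q|%:E < b.
Proof.
case: a => [a| |] a0' ab; last first.
- by have := lt_le_trans (ltNyr 0%R) a0'; rewrite ltxx.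
- by rewrite ltNge leey in ab.
have a0 : (0 <= a)%R by rewrite -lee_fin.
case: b ab => [b| |] ab.
- move: ab; rewrite lte_fin => ab; have [q] := rat_in_itvoo ab.
  rewrite in_itv /= => /andP[aq qb]; exists q.
  rewrite gtr0_norm; last by apply: le_lt_trans aq.
  by split; rewrite ?lee_fin ?lte_fin // ltW.
- have [q] := @rat_in_itvoo R a (a + 1) ltac:(lra).
  rewrite in_itv /= => /andP[aq qb]; exists q.
  rewrite gtr0_norm; last by apply: le_lt_trans aq.
  by split; [rewrite lee_fin ltW | exact: ltry].
- by rewrite ltNge leNye in ab.
Qed.

Lemma uniq_aux nu tau (f g : T -> \bar R) : sigma_maxitive nu -> sigma_maxitive tau ->
  rel_density nu tau f -> rel_density nu tau g -> forall c : R, (0 <= c)%R ->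
  tau_negligible tau ([set x | c%:E < g x] `&` ~` [set x | c%:E < f x]).
Proof.
move=> hnu htau [[f0 mf] hf] [[g0 mg] hg] c c0.
set S := _ `&` _.
have mS : measurable S by apply: measurableI; [exact: mg | apply: measurableC; exact: mf].
have h1 : nu S <= c%:E.
  rewrite hf //; apply: ess_le => // t ct; exists set0; split => //.
    move=> x [[_ nfx] ftx]; by apply: nfx; apply: lt_trans ftx; rewrite lte_fin.
  by have [] := htau.
rewrite hg // in h1; have h2 := ess_inv h1.
have -> : S = \bigcup_n (S `&` [set x | (c + n.+1%:R^-1)%:E < g x]).
  apply/seteqP; split => x; last by move=> [n _ []].
  move=> Sx; have [n hn] := lt_ex_n Sx.1; by exists n.
apply: negl_bigcup => // n; apply: h2.
by rewrite ltrDl invr_gt0.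
Qed.

End helpers.

Theorem corollary5p6 (d : measure_display) (T : measurableType d) (R : realType)
  (hE : inhabited T) (nu tau : set T -> \bar R) :
  sigma_maxitive nu -> sigma_maxitive tau -> sigma_principal tau ->
  (abs_cont nu tau <-> strong_abs_cont nu tau) /\
  (forall f g : T -> \bar R, rel_density nu tau f -> rel_density nu tau g ->
     tau_negligible tau [set x | f x <> g x]).
Proof.
move=> hnu htau hprin; split; last first.
  move=> f g hf hg.
  pose A (f g : T -> \bar R) (q : rat) :=
    [set x | `|ratr q|%:E < g x] `&` ~` [set x | `|ratr q|%:E < f x].
  apply: (@negl_mono _ _ _ _ _ (\bigcup_q (A f g q `|` A g f q))).
    move=> x /eqP; rewrite neq_lt => /orP[] hx.
    - have [q [h1 h2]] := rat_between (proj1 (proj1 hf) x) hx.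
      by exists q => //; left; split => //=; apply/negP; rewrite -leNgt.
    - have [q [h1 h2]] := rat_between (proj1 (proj1 hg) x) hx.
      by exists q => //; right; split => //=; apply/negP; rewrite -leNgt.
  apply: negl_bigcup_rat => // q.
  have [G1 [mG1 s1 t1]] := uniq_aux hnu htau hf hg (normr_ge0 (ratr q)).
  have [G2 [mG2 s2 t2]] := uniq_aux hnu htau hg hf (normr_ge0 (ratr q)).
  exists (G1 `|` G2); split; [exact: measurableU | exact: setUSS |].
  by have [_ _ hmax _] := htau; rewrite hmax // t1 t2 maxxx.
split; last first.
  move=> [f [hf hd]] B mB tB; apply/eqP; rewrite eq_le; apply/andP; split;
    last by have [_ h _ _] := hnu; exact: h.
  rewrite hd //; apply: ess_le => // t t0; exists B; split => //; exact: subIsetl.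
move=> hac.
have [nu0 nuge0 numax _] := hnu.
pose I (r : rat) := [set B : set T | measurable B /\ nu B <= `|ratr r|%:E].
have hI r : sigma_ideal (I r).
  split.
  - by exists set0; split => //; rewrite nu0 lee_fin normr_ge0.
  - by move=> B [].
  - move=> Bn hB; split.
      by apply: bigcupT_measurable => n; case: (hB n).
    by apply: sm_bigcup => // n; case: (hB n).
  - move=> B C mB BC [mC hC]; split => //.
    exact: le_trans (sm_mono hnu mB mC BC) hC.
have : forall r, exists L, I r L /\ forall S, I r S -> tau_negligible tau (S `\` L).
  by move=> r; have [L ? ?] := hprin _ (hI r); exists L.
move=> /choice[L hL].
pose f (x : T) : \bar R := ereal_inf [set `|(ratr r : R)|%:E | r in [set r | L r x]].
have f0 x : 0 <= f x.
  by apply: le_ereal_inf_tmp => _ [r _ <-]; rewrite lee_fin normr_ge0.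
have fL r x : L r x -> f x <= `|ratr r|%:E.
  by move=> Lx; apply: ereal_inf_lbound; exists r.
have mL r : measurable (L r) by case: (hL r) => -[].
have mf : forall t : R, (0 <= t)%R -> measurable [set x | t%:E < f x].
  move=> t t0.
  pose P (n : nat) := [set r : rat | (`|ratr r| < t + n.+1%:R^-1)%R].
  have -> : [set x | t%:E < f x] = \bigcup_n \bigcap_(r in P n) ~` L r.
    apply/seteqP; split => x.
      move=> /lt_ex_n [n hn]; exists n => // r Pr Lrx.
      have := lt_le_trans hn (fL _ _ Lrx); rewrite lte_fin => h.
      by move: Pr; rewrite /P /= ltNge (ltW h).
    move=> [n _ H]; apply: (@lt_le_trans _ _ (t + n.+1%:R^-1)%:E).
      by rewrite lte_fin ltrDl invr_gt0.
    apply: le_ereal_inf_tmp => _ [r Lrx <-]; rewrite lee_fin leNgt.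
    by apply/negP => hr; exact: (H r hr Lrx).
  apply: bigcupT_measurable => n; rewrite bigcap_mkcond.
  apply: measurable_bigcap_rat => r; case: ifP => _; last exact: measurableT.
  exact: measurableC.
exists f; split; first by split.
move=> B mB; apply/eqP; rewrite eq_le; apply/andP; split.
  have e0 := ess_ge0 tau f B.
  case E: (ess_sup_on tau f B) => [c| |]; last by rewrite E in e0.
    2: by rewrite leey.
  have c0 : (0 <= c)%R by rewrite -lee_fin -E.
  apply/lee_addgt0Pr => e epos; rewrite -EFinD.
  pose t := (c + e / 2)%R.
  have t0 : (0 <= t)%R by rewrite /t; lra.
  set S := [set x | t%:E < f x].
  have mS : measurable S by exact: mf.
  have hneg : tau_negligible tau (B `&` S).
    by apply: (@ess_inv _ _ _ _ f B c); [rewrite E | rewrite /t; lra].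
  have -> : B = (B `&` S) `|` (B `&` ~` S) by rewrite -setIUr setUCr setIT.
  rewrite numax; last 2 first.
  - exact: measurableI.
  - by apply: measurableI => //; exact: measurableC.
  rewrite ge_max; apply/andP; split.
    case: hneg => G [mG sub tG].
    apply: le_trans (sm_mono hnu (measurableI _ _ mB mS) mG sub) _.
    by rewrite hac // lee_fin; lra.
  pose Q := [set r : rat | (`|ratr r| < c + e)%R].
  apply: (@le_trans _ _ (nu (\bigcup_r (if r \in Q then L r else set0)))).
    apply: (sm_mono hnu).
    - by apply: measurableI => //; exact: measurableC.
    - by apply: bigcupT_measurable_rat => r; case: ifP.
    move=> x [Bx nSx].
    have fxt : f x <= t%:E by rewrite leNgt; apply/negP.
    have : f x < (c + e)%:E by apply: le_lt_trans fxt _; rewrite lte_fin /t; lra.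
    move/ereal_inf_lt => [_ [r Lrx <-]]; rewrite lte_fin => hr.
    by exists r => //; rewrite (mem_set (hr : Q r)).
  apply: sm_bigcup_rat => //; first by move=> r; case: ifP.
  move=> r; case: ifPn => [/set_mem Qr|_]; last by rewrite nu0 lee_fin; lra.
  case: (hL r) => -[_ hr] _; apply: le_trans hr _.
  by rewrite lee_fin ltW.
have nB0 := nuge0 B mB.
case E: (nu B) => [c| |]; last by rewrite E in nB0.
  2: by rewrite leey.
have c0 : (0 <= c)%R by rewrite -lee_fin -E.
apply: ess_le => // t ct.
have [q] := rat_in_itvoo ct; rewrite in_itv /= => /andP[cq qt].
have q0 : (0 < ratr q :> R)%R by apply: le_lt_trans cq.
case: (hL q) => _ hS.
have IB : I q B by split => //; rewrite E lee_fin gtr0_norm // ltW.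
apply: negl_mono (hS _ IB) => x [Bx ftx]; split => // Lx.
have := fL _ _ Lx; rewrite gtr0_norm // => h.
have := lt_le_trans ftx h; rewrite lte_fin => tq.
by have := lt_trans qt tq; rewrite ltxx.
Qed.
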